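(* Let $G=(V,E)$ be a connected undirected unweighted graph on $N$ vertices, and let $S_0\subseteq V$ be the initial set of mutants. Then under the mixed $\delta$-updating process with $\delta=1/2$ and neutral fitness $r=1$, the fixation probability satisfies $\mathsf{fp}_{r=1}^{\delta=1/2}(G,S_0)=|S_0|/N$.
   Context: Mixed $\delta$-updating on a connected undirected unweighted graph $G=(V,E)$ with $N$ vertices ($\deg(u)$ is the number of neighbors of $u$): each vertex holds a mutant (fitness $r>0$) or a wild-type (fitness $1$); $S\subseteq V$ denotes the current set of mutants and $f_S(u)\in\{1,r\}$ the fitness at $u$. At each discrete time step, independently, with probability $\delta$ a death-Birth (dB) step occurs: a vertex $v$ is chosen uniformly at random to die, then a neighbor $u$ of $v$ is chosen with probability proportional to $f_S(u)$, and $u$ copies its type onto $v$. With probability $1-\delta$ a Birth-death (Bd) step occurs: a vertex $u$ is chosen with probability proportional to $f_S(u)$ among all of $V$, then a neighbor $v$ of $u$ is chosen uniformly at random, and $u$ copies its type onto $v$. Fixation means all vertices become mutant. $\mathsf{fp}_r^\delta(G,S_0)$ is the probability of fixation when the initial mutant set is $S_0$. *)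

(* Defs.v *)
From HB Require Import structures.
From mathcomp Require Import all_boot all_order all_algebra.
From mathcomp Require Import all_classical all_reals all_analysis.
Set Implicit Arguments. Unset Strict Implicit. Unset Printing Implicit Defensive.
Import Order.TTheory GRing.Theory Num.Theory.
Local Open Scope ring_scope.

Section MixedUpdating.
Variables (R : realType) (T : finType) (e : rel T).

Definition undirected_graph := symmetric e /\ irreflexive e.
Definition connected_graph := forall x y : T, connect e x y.

Definition nbrs (u : T) : {set T} := [set w | e u w].
Definition deg (u : T) : nat := #|nbrs u|.

(* fitness of vertex u in state S (S = set of mutants) *)
Definition fit (r : R) (S : {set T}) (u : T) : R := if u \in S then r else 1.

Definition reproduce (S : {set T}) (u v : T) : {set T} :=
  if u \in S then v |: S else S :\ v.

(* death-Birth step transition probability S -> S'.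
   Convention: if the dying vertex has no neighbours, nothing happens. *)
Definition dB_step (r : R) (S S' : {set T}) : R :=
  \sum_(v : T) #|T|%:R^-1 *
    (if deg v == 0%N then (S' == S)%:R
     else \sum_(u in nbrs v)
            fit r S u / (\sum_(w in nbrs v) fit r S w) * (S' == reproduce S u v)%:R).

(* Birth-death step transition probability S -> S'.
   Convention: if the reproducing vertex has no neighbours, nothing happens. *)
Definition Bd_step (r : R) (S S' : {set T}) : R :=
  \sum_(u : T) fit r S u / (\sum_(w : T) fit r S w) *
    (if deg u == 0%N then (S' == S)%:R
     else \sum_(v in nbrs u) (deg u)%:R^-1 * (S' == reproduce S u v)%:R).

Definition mixed_step (delta r : R) (S S' : {set T}) : R :=
  delta * dB_step r S S' + (1 - delta) * Bd_step r S S'.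

Fixpoint mixed_steps (delta r : R) (t : nat) (S S' : {set T}) : R :=
  match t with
  | 0%N => (S' == S)%:R
  | t'.+1 => \sum_(S'' : {set T}) mixed_steps delta r t' S S'' * mixed_step delta r S'' S'
  end.

(* probability that all vertices are mutants at time t, starting from S0;
   the fixation probability fp_r^delta(G,S0) is its limit as t -> oo
   (the state [set: T] is absorbing). *)
Definition fix_by (delta r : R) (S0 : {set T}) (t : nat) : R :=
  mixed_steps delta r t S0 [set: T].

End MixedUpdating.

(* Main.v *)
Require Import Defs.
From HB Require Import structures.
From mathcomp Require Import all_boot all_order all_algebra.
From mathcomp Require Import all_classical all_reals all_analysis.
From mathcomp Require Import ring lra.
Import Order.TTheory GRing.Theory Num.Theory numFieldNormedType.Exports.
Local Open Scope ring_scope.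

Section Proof.
Variables (R : realType) (T : finType) (e : rel T).
Hypothesis HN : (0 < #|T|)%N.
Let N : R := #|T|%:R.
Lemma N_neq0 : N != 0. Proof. by rewrite /N pnatr_eq0 -lt0n. Qed.

Lemma fit1 (S : {set T}) (u : T) : fit (1:R) S u = 1.
Proof. by rewrite /fit; case: ifP. Qed.

Lemma sum_ind (X : {set T}) (g : {set T} -> R) :
  \sum_(S' : {set T}) (S' == X)%:R * g S' = g X.
Proof.
rewrite (bigD1 X) //= eqxx mul1r big1 ?addr0 // => S' /negbTE ->.
by rewrite mul0r.
Qed.

Lemma sum_ker (b : bool) (X A : {set T}) (k : T -> R) (f : T -> {set T}) g :
 \sum_(S' : {set T}) (if b then (S' == X)%:R else \sum_(u in A) k u * (S' == f u)%:R) * g S'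
 = if b then g X else \sum_(u in A) k u * g (f u).
Proof.
case: b; first exact: sum_ind.
under eq_bigr do rewrite mulr_suml.
rewrite exchange_big /=; apply: eq_bigr => u _.
under eq_bigr do rewrite -mulrA.
by rewrite -mulr_sumr sum_ind.
Qed.

Lemma sum_outer (c : T -> R) (F : T -> {set T} -> R) g :
  \sum_(S' : {set T}) (\sum_v c v * F v S') * g S' =
  \sum_v c v * \sum_(S' : {set T}) F v S' * g S'.
Proof.
under eq_bigr do rewrite mulr_suml.
rewrite exchange_big /=; apply: eq_bigr => v _; rewrite mulr_sumr.
by apply: eq_bigr => S' _; rewrite mulrA.
Qed.

Lemma sum_nbrs1 (S : {set T}) v : \sum_(w in nbrs e v) fit (1:R) S w = (deg e v)%:R.
Proof.
rewrite (eq_bigr (fun _ => 1)); last by move=> w _; exact: fit1.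
by rewrite sumr_const.
Qed.

Lemma sum_all1 (S : {set T}) : \sum_(w : T) fit (1:R) S w = N.
Proof.
rewrite (eq_bigr (fun _ => 1)); last by move=> w _; exact: fit1.
by rewrite sumr_const /N.
Qed.

Lemma if_deg v (h : T -> R) c :
  (if deg e v == 0%N then c else \sum_(u in nbrs e v) (deg e v)%:R^-1 * h u)
  = c + \sum_(u in nbrs e v) (deg e v)%:R^-1 * (h u - c).
Proof.
case: eqP => [d0|dn0].
  have -> : nbrs e v = finset.set0 by apply/eqP; rewrite -cards_eq0; apply/eqP.
  by rewrite big_set0 addr0.
under [in RHS]eq_bigr do rewrite mulrBr.
rewrite sumrB sumr_const -/(deg e v).
rewrite -(mulr_natr ((deg e v)%:R^-1 * c)) [_^-1 * c]mulrC mulfVK; first by rewrite addrC subrK.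
by rewrite pnatr_eq0; apply/eqP.
Qed.

Definition D (g : {set T} -> R) S u v := g (reproduce S u v) - g S.

Lemma sum_dB (g : {set T} -> R) S :
  \sum_(S' : {set T}) dB_step e 1 S S' * g S' =
  \sum_v N^-1 * (g S + \sum_(u in nbrs e v) (deg e v)%:R^-1 * D g S u v).
Proof.
rewrite /dB_step sum_outer; apply: eq_bigr => v _.
congr (_ * _).
under eq_bigr => S' _.
  rewrite (eq_bigr (fun u => (deg e v)%:R^-1 * (S' == reproduce S u v)%:R)); last first.
    by move=> u _; rewrite fit1 sum_nbrs1 div1r.
  over.
by rewrite sum_ker if_deg.
Qed.

Lemma sum_Bd (g : {set T} -> R) S :
  \sum_(S' : {set T}) Bd_step e 1 S S' * g S' =
  \sum_u N^-1 * (g S + \sum_(v in nbrs e u) (deg e u)%:R^-1 * D g S u v).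
Proof.
rewrite /Bd_step sum_outer; apply: eq_bigr => u _.
rewrite fit1 sum_all1 div1r; congr (_ * _).
by rewrite sum_ker if_deg.
Qed.

Lemma sum2_split (F G : T -> T -> R) (k : T -> R) :
  \sum_v \sum_(u in nbrs e v) k v * (F u v + G u v) =
  \sum_v \sum_(u in nbrs e v) k v * F u v + \sum_v \sum_(u in nbrs e v) k v * G u v.
Proof.
rewrite -big_split; apply: eq_bigr => v _; rewrite -big_split.
by apply: eq_bigr => u _; rewrite mulrDr.
Qed.

Lemma alg (a X Y : R) : N != 0 ->
  2^-1 * (N^-1 * (a * N + X)) + (1-2^-1) * (N^-1 * (a * N + Y)) = a + (2*N)^-1 * (X + Y).
Proof. by move=> h; field. Qed.

Definition P (g : {set T} -> R) S :=
  \sum_(S' : {set T}) mixed_step e 2^-1 1 S S' * g S'.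

Lemma Pg g S : P g S = g S + (2 * N)^-1 *
  \sum_v \sum_(u in nbrs e v) (deg e v)%:R^-1 * (D g S u v + D g S v u).
Proof.
rewrite /P /mixed_step.
under eq_bigr do rewrite mulrDl -!mulrA.
rewrite big_split -!mulr_sumr /=.
rewrite sum_dB sum_Bd.
rewrite -!mulr_sumr !big_split /= !sumr_const.
rewrite (sum2_split (fun u v => D g S u v) (fun u v => D g S v u)).
rewrite -(mulr_natr (g S)); exact: alg N_neq0.
Qed.

Definition g1 (S : {set T}) : R := #|S|%:R.
Definition g2 (S : {set T}) : R := (#|S|%:R) ^+ 2.

Lemma cU1 v (S : {set T}) : (#|v |: S|%:R : R) = #|S|%:R + (v \notin S)%:R.
Proof. by rewrite cardsU1 natrD addrC. Qed.
Lemma cD1 v (S : {set T}) : (#|S :\ v|%:R : R) = #|S|%:R - (v \in S)%:R.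
Proof. rewrite [in #|S|%:R](cardsD1 v S) natrD; ring. Qed.

Lemma D1_sum S u v : D g1 S u v + D g1 S v u = 0.
Proof.
rewrite /D /reproduce /g1; case hu: (u \in S); case hv: (v \in S);
  rewrite ?cU1 ?cD1 ?hu ?hv /=; ring.
Qed.

Lemma D2_sum S u v : D g2 S u v + D g2 S v u = 2 * ((u \in S) != (v \in S))%:R.
Proof.
rewrite /D /reproduce /g2; case hu: (u \in S); case hv: (v \in S);
  rewrite ?cU1 ?cD1 ?hu ?hv /=; ring.
Qed.

Lemma dB_ge0 S S' : 0 <= dB_step e (1 : R) S S'.
Proof.
rewrite /dB_step; apply: sumr_ge0 => v _; apply: mulr_ge0.
  by rewrite invr_ge0 ler0n.
case: ifP => _; first exact: ler0n.
apply: sumr_ge0 => u _; apply: mulr_ge0; last exact: ler0n.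
by rewrite fit1 sum_nbrs1 div1r invr_ge0 ler0n.
Qed.

Lemma Bd_ge0 S S' : 0 <= Bd_step e (1 : R) S S'.
Proof.
rewrite /Bd_step; apply: sumr_ge0 => u _; apply: mulr_ge0.
  by rewrite fit1 sum_all1 div1r invr_ge0 ler0n.
case: ifP => _; first exact: ler0n.
apply: sumr_ge0 => v _; apply: mulr_ge0; last exact: ler0n.
by rewrite invr_ge0 ler0n.
Qed.

Lemma step_ge0 S S' : 0 <= mixed_step e (2^-1 : R) 1 S S'.
Proof.
rewrite /mixed_step; apply: addr_ge0; apply: mulr_ge0;
  rewrite ?dB_ge0 ?Bd_ge0 //; lra.
Qed.

Lemma single_le (I : finType) (Pr : pred I) (F : I -> R) i :
  Pr i -> (forall j, Pr j -> 0 <= F j) -> F i <= \sum_(j | Pr j) F j.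
Proof.
move=> Pi H; rewrite (bigD1 i) //= lerDl sumr_ge0 // => j /andP[Pj _].
exact: H.
Qed.

Hypothesis Hc : connected_graph e.

Definition nabs (S : {set T}) : R := ((S != finset.set0) && (S != [set: T]))%:R.
Let c : R := (N * N)^-1.

Lemma N_gt0 : 0 < N. Proof. by rewrite /N ltr0n. Qed.

Lemma P2_ge S : g2 S + c * nabs S <= P g2 S.
Proof.
rewrite Pg lerD2l.
have Hsum : forall v, 0 <= \sum_(u in nbrs e v) (deg e v)%:R^-1 * (D g2 S u v + D g2 S v u).
  move=> v; apply: sumr_ge0 => u _; rewrite D2_sum; apply: mulr_ge0.
    by rewrite invr_ge0 ler0n.
  apply: mulr_ge0; [lra | exact: ler0n].
have N2 : 0 <= (2 * N)^-1 by rewrite invr_ge0 mulr_ge0 ?ler0n.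
rewrite /nabs; case hb: (_ && _); last first.
  by rewrite mulr0; apply: mulr_ge0 => //; apply: sumr_ge0 => v _; exact: Hsum.
case/andP: hb => S0n STn.
case/set0Pn: S0n => x xS.
have [y yS] : exists y, y \notin S.
  case: (boolP [exists y, y \notin S]) => [/existsP //|/existsPn H].
  exfalso; move/eqP: STn; apply; apply/setP => z; rewrite finset.in_setT; move: (H z); by rewrite negbK.
have [v [u [evu duv]]] : exists v u, e v u /\ (u \in S) != (v \in S).
  case: (boolP [exists v, exists u, e v u && ((u \in S) != (v \in S))]) =>
    [/existsP[v /existsP[u /andP[h1 h2]]]|/existsPn H]; first by exists v, u.
  have cl : fingraph.closed_mem e (mem S).
    move=> a b eab; apply/eqP; move: (H a) => /existsPn /(_ b).
    by rewrite eab /= negbK eq_sym.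
  by have := closed_connect cl (Hc x y); rewrite xS (negbTE yS).
have uN : u \in nbrs e v by rewrite finset.inE.
have d0 : (0 < deg e v)%N by rewrite /deg card_gt0; apply/set0Pn; exists u.
have dN : (deg e v <= #|T|)%N by exact: max_card.
apply: (@le_trans _ _ ((2*N)^-1 * ((deg e v)%:R^-1 * 2))).
  have dn0 : (deg e v)%:R != 0 :> R by rewrite pnatr_eq0 -lt0n.
  have -> : (2*N)^-1 * ((deg e v)%:R^-1 * 2) = (N * (deg e v)%:R)^-1.
    by move: N_neq0 => hN0; field; rewrite dn0.
  rewrite (_ : true%:R = 1) // mulr1 /c lef_pV2 ?posrE ?mulr_gt0 ?N_gt0 ?ltr0n //.
  by rewrite ler_pM2l ?N_gt0 // /N ler_nat.
apply: ler_wpM2l => //.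
rewrite (bigD1 v) //= -[X in X <= _]addr0; apply: lerD; last first.
  by apply: sumr_ge0 => j _; exact: Hsum.
rewrite (bigD1 u) //= -[X in X <= _]addr0; apply: lerD.
  by rewrite D2_sum duv (_ : true%:R = 1) // mulr1.
apply: sumr_ge0 => j _; rewrite D2_sum; apply: mulr_ge0; first by rewrite invr_ge0 ler0n.
apply: mulr_ge0; [lra | exact: ler0n].
Qed.

Variable S0 : {set T}.
Definition p t S := mixed_steps e (2^-1 : R) 1 t S0 S.
Definition E t (g : {set T} -> R) := \sum_(S : {set T}) p t S * g S.

Lemma Esucc t g : E t.+1 g = E t (P g).
Proof.
rewrite /E /p /=; under eq_bigr do rewrite mulr_suml.
rewrite exchange_big /=; apply: eq_bigr => S'' _; rewrite /P mulr_sumr.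
by apply: eq_bigr => S' _; rewrite mulrA.
Qed.

Lemma E0 g : E 0 g = g S0.
Proof. exact: sum_ind. Qed.

Lemma p_ge0 t S : 0 <= p t S.
Proof.
elim: t S => [|t IH] S /=; first exact: ler0n.
by apply: sumr_ge0 => S'' _; apply: mulr_ge0; [exact: IH | exact: step_ge0].
Qed.

Lemma E_ext t g h : g =1 h -> E t g = E t h.
Proof. by move=> gh; apply: eq_bigr => S _; rewrite gh. Qed.

Lemma E_le t g h : (forall S, g S <= h S) -> E t g <= E t h.
Proof. by move=> gh; apply: ler_sum => S _; apply: ler_wpM2l; [exact: p_ge0 | exact: gh]. Qed.

Lemma E1 t : E t (fun _ => 1) = 1.
Proof.
elim: t => [|t IH]; first by rewrite E0.
rewrite Esucc -IH; apply: E_ext => S.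
rewrite Pg big1 ?mulr0 ?addr0 // => v _; rewrite big1 // => u _.
by rewrite /D !subrr addr0 mulr0.
Qed.

Lemma Eg1 t : E t g1 = #|S0|%:R.
Proof.
elim: t => [|t IH]; first by rewrite E0.
rewrite Esucc -IH; apply: E_ext => S.
rewrite Pg big1 ?mulr0 ?addr0 // => v _; rewrite big1 // => u _.
by rewrite D1_sum mulr0.
Qed.

Lemma E_const t k : E t (fun _ => k) = k.
Proof.
transitivity (E t (fun _ => 1) * k); last by rewrite E1 mul1r.
by rewrite /E mulr_suml; apply: eq_bigr => S _; rewrite mulr1.
Qed.

Lemma E2_grow t : E t g2 + c * E t nabs <= E t.+1 g2.
Proof.
rewrite Esucc; apply: le_trans _ (@E_le t _ _ P2_ge).
rewrite /E mulr_sumr -big_split /=; apply: ler_sum => S _.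
by rewrite mulrDr [c * (p t S * _)]mulrCA lexx.
Qed.

Definition q t := E t nabs.

Lemma g2_le S : g2 S <= N ^+ 2.
Proof. by rewrite /g2 /N -!natrX ler_nat leq_exp2r // max_card. Qed.

Lemma series_bound n : c * series q n <= N ^+ 2.
Proof.
have H : g2 S0 + c * series q n <= E n g2.
  elim: n => [|n IH].
    by rewrite E0 /series /= big_geq // mulr0 addr0.
  apply: le_trans _ (E2_grow n); rewrite seriesSr mulrDr addrA; apply: lerD => //.
have H2 : E n g2 <= N ^+ 2.
  by rewrite -[X in _ <= X](E_const n); apply: E_le => S; exact: g2_le.
have H3 : c * series q n <= g2 S0 + c * series q n.
  by rewrite lerDr /g2 exprn_ge0 // ler0n.
exact: le_trans H3 (le_trans H H2).
Qed.

Lemma q_ge0 t : 0 <= q t.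
Proof. by apply: sumr_ge0 => S _; apply: mulr_ge0; [exact: p_ge0 | exact: ler0n]. Qed.

Lemma c_gt0 : 0 < c.
Proof. by rewrite /c invr_gt0 mulr_gt0 ?N_gt0. Qed.

Lemma q_cvg : (q @ \oo --> 0)%classic.
Proof.
apply: cvg_series_cvg_0; apply: nondecreasing_is_cvgn.
  by apply/nondecreasing_seqP => n; rewrite seriesSr lerDl; exact: q_ge0.
exists (N ^+ 2 / c) => _ [n _ <-].
by rewrite ler_pdivlMr ?c_gt0 // mulrC; exact: series_bound.
Qed.

Definition w t := \sum_(S : {set T} | S != [set: T]) p t S * g1 S.

Lemma w_def t : #|S0|%:R = N * p t [set: T] + w t.
Proof. by rewrite -(Eg1 t) /E (bigD1 [set: T]) //= /g1 cardsT mulrC. Qed.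

Lemma w_ge0 t : 0 <= w t.
Proof. by apply: sumr_ge0 => S _; apply: mulr_ge0; [exact: p_ge0 | exact: ler0n]. Qed.

Lemma w_le t : w t <= N * q t.
Proof.
have -> : N * q t = \sum_(S : {set T}) p t S * (N * nabs S).
  by rewrite /q /E mulr_sumr; apply: eq_bigr => S _; rewrite mulrCA.
apply: (@le_trans _ _ (\sum_(S : {set T} | S != [set: T]) p t S * (N * nabs S))).
  apply: ler_sum => S ST; apply: ler_wpM2l; first exact: p_ge0.
  rewrite /g1 /nabs ST andbT; case: eqP => [->|_].
    by rewrite cards0 mulr_ge0 ?ler0n.
  by rewrite mulr1 /N ler_nat max_card.
rewrite [X in _ <= X](bigD1 [set: T]) //= lerDr.
by apply: mulr_ge0; [exact: p_ge0 | apply: mulr_ge0; exact: ler0n].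
Qed.

Lemma w_cvg : (w @ \oo --> 0)%classic.
Proof.
apply: (@squeeze_cvgr _ _ _ _ (fun=> 0) (fun t => N * q t)).
- by apply: filterE => t; rewrite w_ge0 w_le.
- exact: cvg_cst.
- by rewrite -(mulr0 N); apply: cvgMl_tmp; exact: q_cvg.
Qed.

Lemma main_aux : (fix_by e (2^-1 : R) 1 S0 @ \oo --> (#|S0|%:R / N))%classic.
Proof.
have -> : fix_by e (2^-1 : R) 1 S0 = (fun t => (#|S0|%:R - w t) / N).
  apply/funext => t; symmetry; rewrite (w_def t) addrK mulrC mulKf //.
  exact: N_neq0.
rewrite -[X in (_ --> X / N)%classic](subr0 #|S0|%:R).
apply: cvgMr_tmp; apply: cvgB; [exact: cvg_cst | exact: w_cvg].
Qed.
End Proof.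

Local Open Scope classical_set_scope.
Local Open Scope ring_scope.

Theorem mainTheorem1 (R : realType) (T : finType) (e : rel T)
  (Hg : undirected_graph e) (Hc : connected_graph e) (HN : (0 < #|T|)%N)
  (S0 : {set T}) :
  fix_by e (2^-1 : R) 1 S0 @ \oo --> (#|S0|%:R / #|T|%:R : R).
Proof.
exact: (@main_aux R T e HN Hc S0).
Qed.
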